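(* Let $n\ge 2$ and let $T$ be a uniformly random shifted standard Young tableau of shape $[\Delta_n]^{\mathrm{sh}}$. For every column $c$ with $1\le c<n-1$, the expected number of horizontal adjacencies of $T$ lying in column $c$ equals $1$; and for every row $r$ with $1\le r<n-1$, the expected number of vertical adjacencies of $T$ lying in row $r$ equals $1$.
   Context: $\Delta_n=(n-1,\dots,1)$, $[\Delta_n]^{\mathrm{sh}}=\{(i,j):1\le i\le j\le n-1\}$ (row $i$, column $j$). A shifted standard Young tableau of this shape is a bijection $T$ onto $[\binom n2]$ increasing along rows and columns. For $u=(i,j)$ in the shape, $(T,u)$ is a horizontal adjacency if $(i,j+1)$ is in the shape and $T(i,j+1)=T(u)+1$, a vertical adjacency if $(i+1,j)$ is in the shape and $T(i+1,j)=T(u)+1$; it lies in column $j$ and row $i$. *)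

(* Defs.v *)
From HB Require Import structures.
From mathcomp Require Import all_boot all_order all_algebra.
Set Implicit Arguments. Unset Strict Implicit. Unset Printing Implicit Defensive.

(* Cells are pairs (i,j) of naturals (row i, column j), 1-indexed as in the paper.
   The shifted staircase shape [Delta_n]^sh = {(i,j) : 1 <= i <= j <= n-1}. *)
Definition in_shape (n i j : nat) : bool := [&& 1 <= i, i <= j & j <= n - 1].

Definition ncells (n : nat) : nat := 'C(n, 2).

(* Off the shape, the
   filling is normalised to 0 (so fillings satisfying [is_SYT] correspond
   bijectively to shifted standard Young tableaux of the shape). *)
Definition filling (n : nat) := {ffun 'I_n * 'I_n -> 'I_(ncells n).+1}.

(* value of T at the cell (i,j), given as naturals (0 if out of range) *)
Definition tv {n : nat} (T : filling n) (i j : nat) : nat :=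
  match insub i, insub j with
  | Some a, Some b => nat_of_ord (T (a, b))
  | _, _ => 0
  end.

Definition is_SYT (n : nat) (T : filling n) : bool :=
  [&& [forall a : 'I_n, forall b : 'I_n,
         ~~ in_shape n a b ==> (nat_of_ord (T (a, b)) == 0)],
      [forall a : 'I_n, forall b : 'I_n,
         in_shape n a b ==> (0 < T (a, b))],
      [forall a : 'I_n, forall b : 'I_n, forall c : 'I_n, forall d : 'I_n,
         [&& in_shape n a b, in_shape n c d & T (a, b) == T (c, d)]
           ==> ((a, b) == (c, d))],
      [forall k : 'I_(ncells n).+1, (0 < k) ==>
         [exists a : 'I_n, exists b : 'I_n, in_shape n a b && (T (a, b) == k)]],
      [forall a : 'I_n, forall b : 'I_n,
         in_shape n a b && in_shape n a b.+1 ==> (tv T a b < tv T a b.+1)]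
    &
      [forall a : 'I_n, forall b : 'I_n,
         in_shape n a b && in_shape n a.+1 b ==> (tv T a b < tv T a.+1 b)]].

Definition SYTs (n : nat) : {set filling n} := [set T | @is_SYT n T].

Definition hadj_col (n : nat) (T : filling n) (c : nat) : nat :=
  #|[set a : 'I_n | [&& in_shape n a c, in_shape n a c.+1 &
                        tv T a c.+1 == (tv T a c).+1]]|.

Definition vadj_row (n : nat) (T : filling n) (r : nat) : nat :=
  #|[set b : 'I_n | [&& in_shape n r b, in_shape n r.+1 b &
                        tv T r.+1 b == (tv T r b).+1]]|.

Definition expect_SYT (n : nat) (X : filling n -> nat) : rat :=
  ((\sum_(T in SYTs n) X T)%:R / (#|SYTs n|)%:R)%R.

(* Main.v *)
Require Import Defs.
From HB Require Import structures.
From mathcomp Require Import all_boot all_order all_algebra.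
From mathcomp Require Import zify.
Set Implicit Arguments. Unset Strict Implicit. Unset Printing Implicit Defensive.

Section Work.
Variable n : nat.
Local Notation N := (ncells n).

Lemma tvE (T : filling n) i j (hi : i < n) (hj : j < n) :
  tv T i j = T (Ordinal hi, Ordinal hj).
Proof.
rewrite /tv; case: insubP => [a _ ea|]; last by rewrite hi.
case: insubP => [b _ eb|]; last by rewrite hj.
have -> : a = Ordinal hi by apply: val_inj.
by have -> : b = Ordinal hj by apply: val_inj.
Qed.

Lemma tvO (T : filling n) (a b : 'I_n) : tv T a b = T (a, b).
Proof.
rewrite (tvE T (ltn_ord a) (ltn_ord b)).
have -> : Ordinal (ltn_ord a) = a by apply: val_inj.
by have -> : Ordinal (ltn_ord b) = b by apply: val_inj.
Qed.

Lemma tv0 (T : filling n) i j : ~~ ((i < n) && (j < n)) -> tv T i j = 0.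
Proof.
rewrite /tv negb_and => /orP [h|h]; first by rewrite insubN.
by case: insub => // a; rewrite insubN.
Qed.

Lemma tv_le (T : filling n) i j : tv T i j <= N.
Proof.
rewrite /tv; case: insub => // a; case: insub => // b.
by rewrite -ltnS ltn_ord.
Qed.

Lemma shape_lt i j : in_shape n i j -> (i < n) && (j < n).
Proof. rewrite /in_shape => /and3P [h1 h2 h3]; apply/andP; split; lia. Qed.

Record spec (T : filling n) : Prop := Spec {
  s0 : forall i j, ~~ in_shape n i j -> tv T i j = 0;
  s1 : forall i j, in_shape n i j -> 0 < tv T i j;
  s2 : forall i j i' j', in_shape n i j -> in_shape n i' j' ->
         tv T i j = tv T i' j' -> i = i' /\ j = j';
  s3 : forall m, 0 < m <= N -> exists i j, in_shape n i j /\ tv T i j = m;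
  s4 : forall i j, in_shape n i j -> in_shape n i j.+1 -> tv T i j < tv T i j.+1;
  s5 : forall i j, in_shape n i j -> in_shape n i.+1 j -> tv T i j < tv T i.+1 j }.

Lemma specP T : is_SYT T <-> spec T.
Proof.
split.
- case/andP => /forallP H0 /andP [/forallP H1 /andP [/forallP H2 /andP [/forallP H3
     /andP [/forallP H4 /forallP H5]]]].
  split.
  + move=> i j hs; case: (boolP ((i < n) && (j < n))) => [/andP [hi hj]|h]; last by rewrite tv0.
    rewrite tvE; have := forallP (H0 (Ordinal hi)) (Ordinal hj).
    by rewrite /= hs /= => /eqP.
  + move=> i j hs; have /andP [hi hj] := shape_lt hs; rewrite tvE.
    by have := forallP (H1 (Ordinal hi)) (Ordinal hj); rewrite /= hs.
  + move=> i j i' j' hs hs'; have /andP [hi hj] := shape_lt hs.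
    have /andP [hi' hj'] := shape_lt hs'; rewrite !tvE => e.
    have := forallP (forallP (forallP (H2 (Ordinal hi)) (Ordinal hj)) (Ordinal hi')) (Ordinal hj').
    by rewrite /= hs hs' /= (val_inj e) eqxx /= => /eqP [-> ->].
  + move=> m /andP [m0 mN]; have mN' : m < N.+1 by [].
    have := H3 (Ordinal mN'); rewrite /= m0 /= => /existsP [a /existsP [b /andP [hs /eqP e]]].
    by exists a, b; split => //; rewrite tvO e.
  + move=> i j hs hs'; have /andP [hi hj] := shape_lt hs.
    by have := forallP (H4 (Ordinal hi)) (Ordinal hj); rewrite /= hs hs'.
  + move=> i j hs hs'; have /andP [hi hj] := shape_lt hs.
    by have := forallP (H5 (Ordinal hi)) (Ordinal hj); rewrite /= hs hs'.
- case=> H0 H1 H2 H3 H4 H5.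
  rewrite /is_SYT; repeat (apply/andP; split); apply/forallP => a; try apply/forallP => b.
  + by apply/implyP => hs; have := H0 a b hs; rewrite tvO => ->.
  + by apply/implyP => hs; have := H1 a b hs; rewrite tvO.
  + apply/forallP => c; apply/forallP => d; apply/implyP => /and3P [hs hs' /eqP e].
    have [/val_inj e1 /val_inj e2] : (a : nat) = c /\ (b : nat) = d.
      apply: H2 hs hs' _.
      by rewrite !tvO e.
    by rewrite e1 e2.
  + apply/implyP => a0.
    have [i [j [hs e]]] : exists i j, in_shape n i j /\ tv T i j = a.
      by apply: H3; rewrite a0 -ltnS ltn_ord.
    have /andP [hi hj] := shape_lt hs.
    apply/existsP; exists (Ordinal hi); apply/existsP; exists (Ordinal hj).
    by rewrite hs /=; apply/eqP; apply: val_inj; rewrite /= -(tvE T hi hj) e.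
  + apply/implyP => /andP [hs hs']; exact: H4.
  + apply/implyP => /andP [hs hs']; exact: H5.
Qed.

Lemma row_chain T : spec T -> forall i j d, in_shape n i j -> in_shape n i (j + d) ->
  tv T i j <= tv T i (j + d).
Proof.
move=> sT i j; elim=> [|d IH] h1 h2; first by rewrite addn0.
have h3 : in_shape n i (j + d) by move: h1 h2; rewrite /in_shape => /and3P [? ? ?] /and3P [? ? ?]; apply/and3P; split; lia.
apply: leq_trans (IH h1 h3) _; rewrite addnS; apply: ltnW; apply: (s4 sT) => //; by rewrite -addnS.
Qed.

Lemma col_chain T : spec T -> forall i j d, in_shape n i j -> in_shape n (i + d) j ->
  tv T i j <= tv T (i + d) j.
Proof.
move=> sT i j; elim=> [|d IH] h1 h2; first by rewrite addn0.
have h3 : in_shape n (i + d) j by move: h1 h2; rewrite /in_shape => /and3P [? ? ?] /and3P [? ? ?]; apply/and3P; split; lia.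
apply: leq_trans (IH h1 h3) _; rewrite addnS; apply: ltnW; apply: (s5 sT) => //; by rewrite -addnS.
Qed.

Lemma N_gt0 : 2 <= n -> 0 < N.
Proof. by move=> h; rewrite /ncells bin_gt0. Qed.

Lemma tv11 T : spec T -> 2 <= n -> tv T 1 1 = 1.
Proof.
move=> sT hn; have [a [b [hs e]]] := s3 sT (m := 1) (N_gt0 hn).
have h11 : in_shape n 1 1 by rewrite /in_shape; apply/and3P; split; lia.
have h1b : in_shape n 1 b by move: hs; rewrite /in_shape => /and3P [? ? ?]; apply/and3P; split; lia.
have := row_chain sT (d := b - 1) h11; rewrite subnKC; last by move: hs; rewrite /in_shape => /and3P [? ? ?]; lia.
move=> /(_ h1b) r1.
have := col_chain sT (d := a - 1) h1b; rewrite subnKC; last by move: hs; rewrite /in_shape => /and3P [? ? ?]; lia.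
move=> /(_ hs) r2.
have := s1 sT h11; lia.
Qed.

Lemma tvNN T : spec T -> 2 <= n -> tv T n.-1 n.-1 = N.
Proof.
move=> sT hn; have [a [b [hs e]]] := s3 sT (m := N) (andb_true_intro (conj (N_gt0 hn) (leqnn N))).
have ha : in_shape n a n.-1 by move: hs; rewrite /in_shape => /and3P [? ? ?]; apply/and3P; split; lia.
have hNN : in_shape n n.-1 n.-1 by rewrite /in_shape; apply/and3P; split; lia.
have := row_chain sT (d := n.-1 - b) hs; rewrite subnKC; last by move: hs; rewrite /in_shape => /and3P [? ? ?]; lia.
move=> /(_ ha) r1.
have := col_chain sT (d := n.-1 - a) ha; rewrite subnKC; last by move: hs; rewrite /in_shape => /and3P [? ? ?]; lia.
move=> /(_ hNN) r2.
have := tv_le T n.-1 n.-1; lia.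
Qed.

Definition sgm (k x : nat) := if x == k then k.+1 else if x == k.+1 then k else x.

Lemma sigK k x : sgm k (sgm k x) = x.
Proof. rewrite /sgm; do ! case: eqP; lia. Qed.

Lemma sig_le k x m : x <= m -> k < m -> sgm k x <= m.
Proof. rewrite /sgm; do ! case: eqP; lia. Qed.

Lemma sig0 k : 0 < k -> sgm k 0 = 0.
Proof. rewrite /sgm; do ! case: eqP; lia. Qed.

Lemma sig_pos k x : 0 < k -> 0 < x -> 0 < sgm k x.
Proof. rewrite /sgm; do ! case: eqP; lia. Qed.

Lemma sig_mono k x y : x < y -> ~~ ((x == k) && (y == k.+1)) -> sgm k x < sgm k y.
Proof. rewrite /sgm; do ! case: eqP; lia. Qed.

Lemma sig_inj k : injective (sgm k).
Proof. exact: can_inj (sigK k). Qed.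

Definition tsw k (T : filling n) : filling n := [ffun p => inord (sgm k (T p))].

Lemma tv_swap k T i j : 0 < k -> k < N -> tv (tsw k T) i j = sgm k (tv T i j).
Proof.
move=> k0 kN; case: (boolP ((i < n) && (j < n))) => [/andP [hi hj]|h]; last by rewrite !tv0 // sig0.
rewrite !(tvE _ hi hj) ffunE inordK //; rewrite ltnS; apply: sig_le => //.
by rewrite -ltnS.
Qed.

Lemma swapK k T : k < N -> tsw k (tsw k T) = T.
Proof.
move=> kN; apply/ffunP => p; rewrite !ffunE; apply: val_inj => /=.
have hle : forall x : 'I_N.+1, sgm k x < N.+1.
  by move=> x; rewrite ltnS; apply: sig_le => //; rewrite -ltnS.
by rewrite inordK ?hle // (inordK (hle (T p))) sigK.
Qed.

Lemma swap_spec k T : spec T -> 0 < k -> k < N ->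
  (forall i j, in_shape n i j -> in_shape n i j.+1 -> ~~ ((tv T i j == k) && (tv T i j.+1 == k.+1))) ->
  (forall i j, in_shape n i j -> in_shape n i.+1 j -> ~~ ((tv T i j == k) && (tv T i.+1 j == k.+1))) ->
  spec (tsw k T).
Proof.
move=> sT k0 kN hr hc; split.
- by move=> i j hs; rewrite tv_swap // (s0 sT hs) sig0.
- by move=> i j hs; rewrite tv_swap //; apply: sig_pos => //; apply: (s1 sT).
- move=> i j i' j' hs hs'; rewrite !tv_swap // => /sig_inj; exact: (s2 sT).
- move=> m hm; have [i [j [hs e]]] : exists i j, in_shape n i j /\ tv T i j = sgm k m.
    apply: (s3 sT); apply/andP; split; first by apply: sig_pos; case/andP: hm.
    by apply: sig_le => //; case/andP: hm.
  by exists i, j; rewrite tv_swap // e sigK.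
- move=> i j hs hs'; rewrite !tv_swap //; apply: sig_mono; [exact: (s4 sT)|exact: hr].
- move=> i j hs hs'; rewrite !tv_swap //; apply: sig_mono; [exact: (s5 sT)|exact: hc].
Qed.

End Work.

Section Gen.
Variable n : nat.
Local Notation N := (ncells n).
Variable Q : nat -> nat -> bool.
Variables u v : nat -> nat * nat.
Hypothesis hn : 2 <= n.
Hypothesis hQ1 : Q 1 1.
Hypothesis hQN : ~~ Q n.-1 n.-1.
Hypothesis hdownR : forall a b, in_shape n a b -> in_shape n a b.+1 -> Q a b.+1 -> Q a b.
Hypothesis hdownD : forall a b, in_shape n a b -> in_shape n a.+1 b -> Q a.+1 b -> Q a b.
Hypothesis hcrossR : forall a b, in_shape n a b -> in_shape n a b.+1 -> Q a b -> ~~ Q a b.+1 ->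
  exists x : 'I_n, u x = (a, b) /\ v x = (a, b.+1).
Hypothesis hcrossD : forall a b, in_shape n a b -> in_shape n a.+1 b -> Q a b -> ~~ Q a.+1 b ->
  exists x : 'I_n, u x = (a, b) /\ v x = (a.+1, b).
Hypothesis huv : forall x : 'I_n, in_shape n (u x).1 (u x).2 -> in_shape n (v x).1 (v x).2 ->
  (Q (u x).1 (u x).2 && ~~ Q (v x).1 (v x).2) /\
  (v x = ((u x).1, (u x).2.+1) \/ v x = ((u x).1.+1, (u x).2)).
Hypothesis hu_inj : forall x y : 'I_n, in_shape n (u x).1 (u x).2 -> u x = u y -> x = y.

Definition pk (T : filling n) m :=
  [exists a : 'I_n, exists b : 'I_n, [&& in_shape n a b, tv T a b == m & Q a b]].
Definition adjx (T : filling n) (x : 'I_n) :=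
  [&& in_shape n (u x).1 (u x).2, in_shape n (v x).1 (v x).2 &
      tv T (v x).1 (v x).2 == (tv T (u x).1 (u x).2).+1].
Definition adjb (T : filling n) k := [exists x : 'I_n, adjx T x && (tv T (u x).1 (u x).2 == k)].
Definition gg (T : filling n) k := pk T k && ~~ pk T k.+1.
Definition hh (T : filling n) k := ~~ pk T k && pk T k.+1.

Lemma pk_cell T a b m : spec T -> in_shape n a b -> tv T a b = m -> pk T m = Q a b.
Proof.
move=> sT hs e; have /andP [ha hb] := shape_lt hs.
apply/idP/idP.
- case/existsP => a' /existsP [b' /and3P [hs' /eqP e' q]].
  by have [<- <-] := s2 sT hs' hs (etrans e' (esym e)).
- move=> q; apply/existsP; exists (Ordinal ha); apply/existsP; exists (Ordinal hb).
  by rewrite /= hs e eqxx q.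
Qed.

Lemma sig_eq k x m : (sgm k x == m) = (x == sgm k m).
Proof. by rewrite -{1}(sigK k m) (inj_eq (@sig_inj k)). Qed.

Lemma pk_swap k T m : 0 < k -> k < N -> pk (tsw k T) m = pk T (sgm k m).
Proof.
move=> k0 kN; apply: eq_existsb => a; apply: eq_existsb => b.
by rewrite tv_swap // sig_eq.
Qed.

Lemma sigk k : sgm k k = k.+1. Proof. by rewrite /sgm eqxx. Qed.
Lemma sigk1 k : sgm k k.+1 = k. Proof. by rewrite /sgm eqxx; case: eqP => //; lia. Qed.

Lemma claimA T k : spec T -> 0 < k -> k < N -> gg T k -> ~~ adjb T k ->
  spec (tsw k T) /\ hh (tsw k T) k.
Proof.
move=> sT k0 kN /andP [pk1 pk2] nadj; split; last first.
  by rewrite /hh !pk_swap // sigk sigk1 pk1 pk2.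
apply: swap_spec => // i j hs hs'; apply/negP => /andP [/eqP e1 /eqP e2];
  move: pk1 pk2; rewrite (pk_cell sT hs e1).
- rewrite (pk_cell sT hs' e2) => q1 q2.
  have [x [ex fx]] := hcrossR hs hs' q1 q2.
  move/negP: nadj; apply; apply/existsP; exists x.
  by rewrite /adjx ex fx /= hs hs' e1 e2 !eqxx.
- rewrite (pk_cell sT hs' e2) => q1 q2.
  have [x [ex fx]] := hcrossD hs hs' q1 q2.
  move/negP: nadj; apply; apply/existsP; exists x.
  by rewrite /adjx ex fx /= hs hs' e1 e2 !eqxx.
Qed.

Lemma uv_lt (T : filling n) (x : 'I_n) : spec T -> in_shape n (u x).1 (u x).2 -> in_shape n (v x).1 (v x).2 ->
  tv T (u x).1 (u x).2 < tv T (v x).1 (v x).2.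
Proof.
move=> sT hu hv; have [_ [e|e]] := huv hu hv; move: hv; rewrite e /= => hv.
- exact: (s4 sT).
- exact: (s5 sT).
Qed.

Lemma claimB T k : spec T -> 0 < k -> k < N -> hh T k ->
  [/\ spec (tsw k T), gg (tsw k T) k & ~~ adjb (tsw k T) k].
Proof.
move=> sT k0 kN /andP [pk1 pk2]; split.
- apply: swap_spec => // i j hs hs'; apply/negP => /andP [/eqP e1 /eqP e2];
    move: pk1 pk2; rewrite (pk_cell sT hs e1) (pk_cell sT hs' e2) => q1 q2.
  + by move/negP: q1; apply; apply: hdownR.
  + by move/negP: q1; apply; apply: hdownD.
- by rewrite /gg !pk_swap // sigk sigk1 pk1 pk2.
- apply/negP => /existsP [x /andP [/and3P [hu hv /eqP e] /eqP e']].
  move: e e'; rewrite !tv_swap // => e.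
  move/eqP; rewrite sig_eq sigk => /eqP e'.
  move: e; rewrite e' sigk1 => /(f_equal (sgm k)); rewrite sigK sigk1 => e.
  have := uv_lt sT hu hv; rewrite e e'; lia.
Qed.

Lemma claimC T k : spec T -> adjb T k -> gg T k.
Proof.
move=> sT /existsP [x /andP [/and3P [hu hv /eqP e] /eqP e']].
have [/andP [q1 q2] _] := huv hu hv.
by rewrite /gg (pk_cell sT hu e') (pk_cell sT hv (etrans e (f_equal _ e'))) q1 q2.
Qed.


Lemma sum_card (A : {set filling n}) (P : pred (filling n)) :
  \sum_(T in A) (P T : nat) = #|[set T in A | P T]|.
Proof.
rewrite -sum1_card big_mkcond /= [RHS]big_mkcond /=; apply: eq_bigr => T _.
by rewrite !inE; case: (T \in A); case: (P T).
Qed.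

Lemma card_sum (P : pred 'I_n) : #|[set x | P x]| = \sum_x (P x : nat).
Proof.
rewrite -sum1_card big_mkcond /=; apply: eq_bigr => x _.
by rewrite !inE; case: (P x).
Qed.

Lemma count_k k : 0 < k -> k < N ->
  #|[set T in SYTs n | gg T k]| = #|[set T in SYTs n | hh T k]| + #|[set T in SYTs n | adjb T k]|.
Proof.
move=> k0 kN.
set G := [set T in SYTs n | gg T k]; set H := [set T in SYTs n | hh T k].
set Ad := [set T in SYTs n | adjb T k].
rewrite -(cardsID Ad G) addnC.
have -> : G :&: Ad = Ad.
  apply/setP => T; rewrite !inE; apply/andP/idP => [[/andP [] //]|/andP [h1 h2]].
  by rewrite h1 h2 claimC //; apply/specP.
congr (_ + _).
have inj : injective (@tsw n k) by move=> T1 T2 e; rewrite -(swapK T1 kN) e swapK.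
apply/eqP; rewrite eqn_leq; apply/andP; split.
- rewrite -(card_imset _ inj); apply: subset_leq_card; apply/subsetP => T'.
  case/imsetP => T; rewrite !inE => /andP [nad /andP [sT0 g]] ->.
  have sT := proj1 (specP _) sT0; rewrite sT0 /= in nad.
  have [s h] := claimA sT k0 kN g nad.
  by rewrite h andbT; apply/specP.
- rewrite -(card_imset _ inj); apply: subset_leq_card; apply/subsetP => T'.
  case/imsetP => T; rewrite !inE => /andP [sT0 h] ->.
  have sT := proj1 (specP _) sT0.
  have [s g nad] := claimB sT k0 kN h.
  have s' := proj2 (specP _) s.
  by rewrite g s' /= nad.
Qed.

Lemma tele (f : nat -> bool) m : 1 <= m ->
  f 1 + \sum_(1 <= k < m) (~~ f k && f k.+1 : nat) = f m + \sum_(1 <= k < m) (f k && ~~ f k.+1 : nat).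
Proof.
elim: m => [//|m IH] hm.
case: (ltnP 0 m) => m0; last first.
  have e : m = 0 by lia.
  by rewrite e !big_geq.
rewrite !big_nat_recr //=; have := IH m0.
case: (f m); case: (f m.+1) => /=; lia.
Qed.

Lemma tele_T T : spec T ->
  \sum_(1 <= k < N) (gg T k : nat) = \sum_(1 <= k < N) (hh T k : nat) + 1.
Proof.
move=> sT.
have h11 : in_shape n 1 1 by rewrite /in_shape; apply/and3P; split; lia.
have hNN : in_shape n n.-1 n.-1 by rewrite /in_shape; apply/and3P; split; lia.
have p1 : pk T 1 by rewrite (pk_cell sT h11 (tv11 sT hn)).
have pN : pk T N = false by rewrite (pk_cell sT hNN (tvNN sT hn)); apply/negbTE.
rewrite /gg /hh; have := tele (pk T) (N_gt0 hn); rewrite p1 pN /=; lia.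
Qed.

Lemma sum_ind t m p : m <= p -> \sum_(m <= k < p) (t == k : nat) = (m <= t < p).
Proof.
elim: p => [|p IH] hmp; first by rewrite big_geq //; lia.
case: (ltnP p m) => hp.
  rewrite big_geq //; case: (boolP (m <= t < p.+1)) => // /andP [? ?]; lia.
rewrite big_nat_recr //= IH //; case: eqP => [->|]; case: (boolP (m <= t < p)); case: (boolP (m <= _ < p.+1)) => /=; lia.
Qed.

Lemma sum_uniq (P : pred 'I_n) : (forall x y, P x -> P y -> x = y) ->
  \sum_x (P x : nat) = [exists x, P x].
Proof.
move=> uP; case: (pickP P) => [x0 Px0|nP].
  rewrite (bigD1 x0) //= big1 => [|y ny].
    have ex : [exists x, P x] by apply/existsP; exists x0.
    by rewrite Px0 ex.
  by case: (boolP (P y)) => // Py; move: ny; rewrite (uP _ _ Py Px0) eqxx.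
rewrite big1 => [|y _]; last by rewrite nP.
have ex : [exists x, P x] = false by apply/negbTE/existsPn => x; rewrite nP.
by rewrite ex.
Qed.

Definition AA (T : filling n) := #|[set x : 'I_n | adjx T x]|.

Lemma AA_sum T : spec T -> AA T = \sum_(1 <= k < N) (adjb T k : nat).
Proof.
move=> sT; rewrite /AA card_sum.
transitivity (\sum_x \sum_(1 <= k < N) (adjx T x && (tv T (u x).1 (u x).2 == k) : nat)).
  apply: eq_bigr => x _; case: (boolP (adjx T x)) => [ad|_]; last by rewrite big1.
  rewrite /= (eq_bigr (fun k => (tv T (u x).1 (u x).2 == k : nat))) //.
  rewrite sum_ind; last by have := N_gt0 hn.
  case/and3P: ad => hu hv /eqP e; have := s1 sT hu; have := tv_le T (v x).1 (v x).2.
  by rewrite e => h1 h2; rewrite h1 h2.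
rewrite exchange_big /=; apply: eq_bigr => k _.
rewrite sum_uniq // => x y /andP [/and3P [hu _ _] /eqP ex] /andP [/and3P [hu' _ _] /eqP ey].
apply: hu_inj => //.
have [e1 e2] := s2 sT hu hu' (etrans ex (esym ey)).
by rewrite [u x]surjective_pairing [u y]surjective_pairing e1 e2.
Qed.

Lemma main_count : \sum_(T in SYTs n) AA T = #|SYTs n|.
Proof.
have sp : forall T, T \in SYTs n -> spec T by move=> T; rewrite inE => /specP.
rewrite (eq_bigr (fun T => \sum_(1 <= k < N) (adjb T k : nat))); last by move=> T /sp /AA_sum.
have E1 : \sum_(T in SYTs n) \sum_(1 <= k < N) (gg T k : nat) =
          \sum_(T in SYTs n) \sum_(1 <= k < N) (hh T k : nat) + #|SYTs n|.
  rewrite -sum1_card -big_split /=; apply: eq_bigr => T /sp sT; exact: tele_T.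
have E2 : \sum_(1 <= k < N) \sum_(T in SYTs n) (gg T k : nat) =
          \sum_(1 <= k < N) \sum_(T in SYTs n) (hh T k : nat) +
          \sum_(1 <= k < N) \sum_(T in SYTs n) (adjb T k : nat).
  rewrite -big_split /=; apply: eq_big_nat => k /andP [k0 kN].
  by rewrite !sum_card count_k.
move: E1 E2; rewrite exchange_big /= [X in _ = X + _ -> _]exchange_big /= => ->.
rewrite [X in _ = _ + X -> _]exchange_big /= => /addnI ->; by [].
Qed.

End Gen.

Lemma sum_row m a : \sum_(0 <= b < m) ((1 <= a) && (a <= b) : nat) = if 1 <= a then m - a else 0.
Proof.
elim: m => [|m IH]; first by rewrite big_geq //; case: ifP.
rewrite big_nat_recr //= IH; case: (leqP 1 a) => h /=; last by rewrite addn0.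
case: (leqP a m) => h2; lia.
Qed.

Lemma cnt1 m : \sum_(0 <= a < m.+1) (1 <= a : nat) = m.
Proof.
elim: m => [|m IH]; first by rewrite big_nat1.
by rewrite big_nat_recr //= IH addn1.
Qed.

Lemma sum_tri m : \sum_(0 <= a < m) \sum_(0 <= b < m) ([&& 1 <= a, a <= b & b <= m - 1] : nat) = 'C(m, 2).
Proof.
rewrite (eq_bigr (fun a => if 1 <= a then m - a else 0)); last first.
  move=> a _; rewrite -sum_row; apply: eq_big_nat => b /andP [_ hb].
  by rewrite (_ : b <= m - 1 = true) ?andbT //; lia.
elim: m => [|m IH]; first by rewrite big_geq.
rewrite (eq_big_nat _ _ (F2 := fun a => (if 1 <= a then m - a else 0) + (1 <= a))); last first.
  by move=> a /andP [_ ha]; case: (leqP 1 a) => h /=; lia.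
rewrite big_split /= cnt1 big_nat_recr //= IH subnn binS bin1; case: ifP => _; lia.
Qed.

Section Constr.
Variable n : nat.
Hypothesis hn : 2 <= n.
Local Notation N := (ncells n).

Definition Sh := [set p : 'I_n * 'I_n | in_shape n p.1 p.2].

Lemma card_Sh : #|Sh| = N.
Proof.
rewrite /ncells -sum_tri -sum1_card big_mkcond /=.
transitivity (\sum_(a : 'I_n) \sum_(b : 'I_n) ([&& 1 <= (a : nat), (a : nat) <= b & (b : nat) <= n - 1] : nat)).
  rewrite pair_big /=; apply: eq_bigr => [[a b]] _.
  by rewrite inE /in_shape; case: (_ && _).
rewrite big_mkord; apply: eq_bigr => a _; by rewrite big_mkord.
Qed.

Definition lexle (p q : nat * nat) := (p.1 < q.1) || ((p.1 == q.1) && (p.2 <= q.2)).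

Definition rkset i j := [set p : 'I_n * 'I_n | in_shape n p.1 p.2 && lexle (p.1 : nat, p.2 : nat) (i, j)].
Definition rk i j := #|rkset i j|.

Lemma rk_le i j : rk i j <= N.
Proof.
rewrite -card_Sh; apply: subset_leq_card; apply/subsetP => p; rewrite !inE.
by case/andP.
Qed.

Definition T0 : filling n :=
  [ffun p : 'I_n * 'I_n => if in_shape n p.1 p.2 then inord (rk p.1 p.2) else ord0].

Lemma tvT0 i j : tv T0 i j = if in_shape n i j then rk i j else 0.
Proof.
case: (boolP ((i < n) && (j < n))) => [/andP [hi hj]|h].
  rewrite (tvE _ hi hj) ffunE /=; case: ifP => // _.
  by rewrite inordK // ltnS rk_le.
rewrite tv0 //; case: ifP => // /shape_lt; by rewrite (negbTE h).
Qed.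

Lemma rk_pos i j : in_shape n i j -> 0 < rk i j.
Proof.
move=> hs; have /andP [hi hj] := shape_lt hs.
apply/card_gt0P; exists (Ordinal hi, Ordinal hj); rewrite inE /= hs /lexle /=.
by rewrite eqxx leqnn orbT.
Qed.

Lemma rk_lt i j i' j' : in_shape n i' j' -> lexle (i, j) (i', j') -> (i, j) != (i', j') ->
  rk i j < rk i' j'.
Proof.
move=> hs' hl hne; have /andP [hi hj] := shape_lt hs'.
have hne' : (i != i') || (j != j') by move: hne; rewrite xpair_eqE negb_and.
apply: proper_card; apply/properP; split.
  apply/subsetP => p; rewrite !inE => /andP [-> hp] /=; move: hp hl; rewrite /lexle /=.
  lia.
exists (Ordinal hi, Ordinal hj); rewrite !inE /= hs' /lexle /=.
  lia.
move: hl hne'; rewrite /lexle /=; lia.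
Qed.


Lemma tvOp (T : filling n) (p : 'I_n * 'I_n) : tv T p.1 p.2 = T p.
Proof. by case: p => a b; exact: tvO. Qed.

Lemma T0_spec : spec T0.
Proof.
have s2 : forall i j i' j', in_shape n i j -> in_shape n i' j' ->
    tv T0 i j = tv T0 i' j' -> i = i' /\ j = j'.
  move=> i j i' j' hs hs'; rewrite !tvT0 hs hs' => e.
  case: (eqVneq (i, j) (i', j')) => [[-> ->] //|ne].
  case: (boolP (lexle (i, j) (i', j'))) => hl.
    by have := rk_lt hs' hl ne; rewrite e ltnn.
  have hl' : lexle (i', j') (i, j) by move: hl; rewrite /lexle /=; lia.
  have ne' : (i', j') != (i, j) by rewrite eq_sym.
  by have := rk_lt hs hl' ne'; rewrite e ltnn.
split => //.
- by move=> i j hs; rewrite tvT0 (negbTE hs).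
- by move=> i j hs; rewrite tvT0 hs rk_pos.
- move=> m /andP [m0 mN].
  set X := T0 @: Sh; set Y := [set k : 'I_N.+1 | 0 < k].
  have XY : X \subset Y.
    apply/subsetP => k /imsetP [p]; rewrite inE => hs ->; rewrite inE.
    by rewrite -tvOp tvT0 hs rk_pos.
  have cX : #|X| = N.
    rewrite card_in_imset ?card_Sh // => p q; rewrite !inE => hp hq e.
    have := s2 _ _ _ _ hp hq; rewrite !tvOp e => /(_ erefl) [e1 e2].
    by case: p q e1 e2 {hp hq e} => [a b] [c d] /= /val_inj -> /val_inj ->.
  have cY : #|Y| = N.
    have -> : Y = [set~ ord0] by apply/setP => k; rewrite !inE lt0n.
    by rewrite cardsC1 card_ord.
  have XeY : X = Y by apply/eqP; rewrite eqEcard XY cX cY leqnn.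
  have : inord m \in Y by rewrite inE inordK.
  rewrite -XeY => /imsetP [p]; rewrite inE => hs e.
  exists p.1, p.2; split => //; by rewrite tvOp -e inordK.
- move=> i j hs hs'; rewrite !tvT0 hs hs'; apply: rk_lt => //; rewrite ?/lexle /= ?xpair_eqE; lia.
- move=> i j hs hs'; rewrite !tvT0 hs hs'; apply: rk_lt => //; rewrite ?/lexle /= ?xpair_eqE; lia.
Qed.

Lemma SYT_nonempty : 0 < #|SYTs n|.
Proof. by apply/card_gt0P; exists T0; rewrite inE; apply/specP; exact: T0_spec. Qed.

End Constr.
Import GRing.Theory Num.Theory.

Lemma expect_one n (X : filling n -> nat) : 2 <= n ->
  \sum_(T in SYTs n) X T = #|SYTs n| -> expect_SYT X = 1%R.
Proof.
move=> hn e; rewrite /expect_SYT e divff //.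
by rewrite pnatr_eq0 -lt0n SYT_nonempty.
Qed.

Theorem mainTheorem12 (n : nat) (hn : 2 <= n) :
  (forall c : nat, 1 <= c -> c < n - 1 ->
     @expect_SYT n (fun T => @hadj_col n T c) = 1%R) /\
  (forall r : nat, 1 <= r -> r < n - 1 ->
     @expect_SYT n (fun T => @vadj_row n T r) = 1%R).
Proof.
split.
- move=> c c1 cn; apply: expect_one => //.
  have := @main_count n (fun a b => b <= c) (fun x => (x, c)) (fun x => (x, c.+1)) hn.
  move=> /(_ c1 _) H; rewrite -H; first by [].
  + rewrite -ltnNge; lia.
  + move=> a b _ _ /=; lia.
  + by [].
  + move=> a b hs hs' /= q1 q2; have /andP [ha _] := shape_lt hs.
    exists (Ordinal ha); rewrite /=; have -> : b = c by lia. by [].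
  + move=> a b _ _ /= q1 q2; by rewrite q1 in q2.
  + move=> x _ _ /=; split; last by left.
    by rewrite leqnn /= -ltnNge.
  + by move=> x y _ [] /val_inj.
- move=> r r1 rn; apply: expect_one => //.
  have := @main_count n (fun a b => a <= r) (fun x => (r, x)) (fun x => (r.+1, x)) hn.
  move=> /(_ r1 _) H; rewrite -H; first by [].
  + rewrite -ltnNge; lia.
  + by [].
  + move=> a b _ _ /=; lia.
  + move=> a b _ _ /= q1 q2; by rewrite q1 in q2.
  + move=> a b hs hs' /= q1 q2; have /andP [_ hb] := shape_lt hs.
    exists (Ordinal hb); rewrite /=; have -> : a = r by lia. by [].
  + move=> x _ _ /=; split; last by right.
    by rewrite leqnn /= -ltnNge.
  + by move=> x y _ [] /val_inj.
Qed.
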